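(* Let $G\subset GL_d(\mathbb R)$ act on $\mathfrak g_{\le n}(\mathbb R^d)$, let $U\subset\mathfrak g_{\le n}(\mathbb R^d)$ be a non-empty, $G$-invariant, semialgebraic subset, and let $\varrho:U\to G$ be an almost-polynomial moving frame for the action of $G$ on $U$, with associated maps $\lambda,\kappa$. Then the non-zero components of $\mathbf c\mapsto\lambda(\mathbf c)\varrho(\mathbf c)\cdot\mathbf c$ form a fundamental set of invariants consisting only of polynomial invariants.
   Context: $\mathfrak g_{\le n}(\mathbb R^d)$ is the free step-$n$ nilpotent Lie algebra realized inside the truncated tensor algebra $T_{\le n}(\mathbb R^d)$ (spanned by words over $\{1,\dots,d\}$ of length $\le n$, concatenation product), $\mathfrak g_{\le n}=\bigoplus_{k=1}^nW_k$, $W_1=\mathrm{span}\{1,\dots,d\}$, $W_{k+1}=[W_1,W_k]$; $B=(b_{ij})\in GL_d(\mathbb R)$ acts by the algebra automorphism sending letter $i\mapsto\sum_jb_{ji}j$ (i.e. $B^{\otimes k}$ on level $k$), which preserves $\mathfrak g_{\le n}$; $\mathbb R[\mathfrak g_{\le n}(\mathbb R^d)]$ denotes polynomial functions in its coordinates. A moving frame is a smooth map $\varrho:U\to G$ with $\varrho(g\cdot\mathbf c)=\varrho(\mathbf c)g^{-1}$. It is almost-polynomial if there are maps $\lambda:U\to GL_d(\mathbb R)$ and $\kappa:\mathfrak g_{\le n}(\mathbb R^d)\to GL_d(\mathbb R)$ such that $\lambda$ is $G$-invariant, $\lambda(\mathbf c)$ is diagonal for all $\mathbf c\in U$, $\lambda_{ii}\varrho_{ij}\in\mathbb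 R[\mathfrak g_{\le n}(\mathbb R^d)]$ for all $i,j$, and $\lambda(\mathbf c)=\kappa\big(\lambda(\mathbf c)\varrho(\mathbf c)\cdot\mathbf c\big)$ for all $\mathbf c\in U$. A set of invariants $\{J_1,\dots,J_m\}$ on $U$ is fundamental if every $G$-invariant function $I$ on $U$ can be written $I(p)=I'(J_1(p),\dots,J_m(p))$ for some function $I'$. *)

(* Defs.v *)
From HB Require Import structures.
From mathcomp Require Import all_boot all_order all_algebra.
From mathcomp Require Import all_classical all_reals all_analysis.
Set Implicit Arguments. Unset Strict Implicit. Unset Printing Implicit Defensive.
Import Order.TTheory GRing.Theory Num.Theory.
Import numFieldNormedType.Exports.
Local Open Scope classical_set_scope.
Local Open Scope ring_scope.

Definition Word (n d : nat) := {k : 'I_n.+1 & (nat_of_ord k).-tuple 'I_d}.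
Definition wseq n d (w : Word n d) : seq 'I_d := tval (tagged w).

Section Tensors.
Variables (R : realType) (n d : nat).

(** The truncated tensor algebra T_{<=n}(R^d), as coordinate vectors indexed
    by the words of length <= n (coordinate of word w = [coef x w]). *)
Definition tens := 'rV[R]_#|{: Word n d}|.
Definition coef (x : tens) (w : Word n d) : R := x ord0 (enum_rank w).
Definition mktens (f : Word n d -> R) : tens := \row_i f (enum_val i).

(** coefficient of an arbitrary sequence of letters (0 if longer than n) *)
Definition cseq (x : tens) (s : seq 'I_d) : R :=
  \sum_(w : Word n d) if wseq w == s then coef x w else 0.

(** concatenation product, truncated at level n *)
Definition tmul (x y : tens) : tens :=
  mktens (fun w => \sum_(m < (size (wseq w)).+1)
                     cseq x (take m (wseq w)) * cseq y (drop m (wseq w))).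
Definition tbracket (x y : tens) : tens := tmul x y - tmul y x.

(** W_1 = span of the letters *)
Definition W1 (x : tens) : Prop :=
  forall w : Word n d, size (wseq w) != 1%N -> coef x w = 0.

(** W_k; W_{k+1} = [W_1, W_k] (the span of brackets = finite sums of brackets) *)
Fixpoint Wlev (k : nat) : tens -> Prop :=
  match k with
  | 0 => fun x => x = 0
  | k'.+1 =>
    match k' with
    | 0 => W1
    | _ => fun x => exists s : seq (tens * tens),
              (forall p, p \in s -> W1 p.1 /\ Wlev k' p.2) /\
              x = \sum_(p <- s) tbracket p.1 p.2
    end
  end.

(** g_{<=n}(R^d) = W_1 + ... + W_n *)
Definition lie (x : tens) : Prop :=
  exists xs : 'I_n -> tens, (forall k : 'I_n, Wlev k.+1 (xs k)) /\
                          x = \sum_(k < n) xs k.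

(** action of B in GL_d: letter i |-> sum_j b_ji j, i.e. B^{(x)k} on level k *)
Definition act (B : 'M[R]_d) (x : tens) : tens :=
  mktens (fun w => \sum_(v : Word n d | size (wseq v) == size (wseq w))
                     coef x v * \prod_(p <- zip (wseq w) (wseq v)) B p.1 p.2).

Inductive polyfun : (tens -> R) -> Prop :=
| pf_const (a : R) : polyfun (fun _ => a)
| pf_coord (i : 'I_#|{: Word n d}|) : polyfun (fun x => x ord0 i)
| pf_add f g : polyfun f -> polyfun g -> polyfun (fun x => f x + g x)
| pf_mul f g : polyfun f -> polyfun g -> polyfun (fun x => f x * g x).

Definition poly_on (U : set tens) (f : tens -> R) : Prop :=
  exists p, polyfun p /\ forall c, U c -> f c = p c.

(** semialgebraic sets: finite unions of sets
    { p_1 = 0 /\ .. /\ q_1 > 0 /\ .. } with polynomial p_i, q_j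
    (atom (p, true) means p = 0, atom (p, false) means p > 0) *)
Definition semialgebraic (S : set tens) : Prop :=
  exists L : seq (seq ((tens -> R) * bool)),
    (forall cl, cl \in L -> forall a, a \in cl -> polyfun a.1) /\
    forall c, S c <-> exists2 cl, cl \in L &
       forall a, a \in cl -> if a.2 then a.1 c = 0 else 0 < a.1 c.

(** C^k functions on an open set (all iterated directional derivatives
    exist and are continuous) *)
Fixpoint Ck (k : nat) (O : set tens) (f : tens -> R) : Prop :=
  match k with
  | 0 => forall x, O x -> {for x, continuous f}
  | k'.+1 => (forall x v, O x -> derivable f x v) /\
             forall v, Ck k' O (fun x => derive f x v)
  end.

(** smooth map on an arbitrary subset U: locally the restriction of a
    smooth map defined on an open set *)
Definition smooth_on (U : set tens) (f : tens -> 'M[R]_d) : Prop :=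
  forall c, U c -> exists O : set tens, exists F : tens -> 'M[R]_d,
    [/\ open O, O c, (forall i j k, Ck k O (fun x => F x i j)) &
      forall x, U x -> O x -> F x = f x].

Definition is_subgroup (G : set 'M[R]_d) : Prop :=
  [/\ G 1%:M, (forall A, G A -> A \in unitmx),
      (forall A B, G A -> G B -> G (A *m B)) & (forall A, G A -> G (invmx A))].

Definition moving_frame (G : set 'M[R]_d) (U : set tens) (rho : tens -> 'M[R]_d) :=
  [/\ smooth_on U rho, (forall c, U c -> G (rho c)) &
      forall g c, G g -> U c -> rho (act g c) = rho c *m invmx g].

Definition almost_polynomial (G : set 'M[R]_d) (U : set tens)
    (rho lam kappa : tens -> 'M[R]_d) : Prop :=
  [/\ (forall c, U c -> lam c \in unitmx /\ is_diag_mx (lam c)),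
      (forall g c, G g -> U c -> lam (act g c) = lam c),
      (forall i j, poly_on U (fun c => lam c i i * rho c i j)),
      (forall x, lie x -> kappa x \in unitmx) &
      (forall c, U c -> lam c = kappa (act (lam c *m rho c) c))].

Definition invariant_on (G : set 'M[R]_d) (U : set tens) (f : tens -> R) :=
  forall g c, G g -> U c -> f (act g c) = f c.

End Tensors.

(* Main.v *)
Require Import Defs.
From HB Require Import structures.
From mathcomp Require Import all_boot all_order all_algebra.
From mathcomp Require Import all_classical all_reals all_analysis.
Import Order.TTheory GRing.Theory Num.Theory.
Local Open Scope classical_set_scope.
Local Open Scope ring_scope.

Section H.
Variables (R : realType) (n d : nat).
Local Notation tens := (tens R n d).
Local Notation Word := (Word n d).

Definition PZ (B : 'M[R]_d) (s t : seq 'I_d) : R :=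
  \prod_(p <- zip s t) B p.1 p.2.

Definition K (B : 'M[R]_d) (w v : Word) : R :=
  if size (wseq v) == size (wseq w) then PZ B (wseq w) (wseq v) else 0.

Lemma coef_mktens (f : Word -> R) w : coef (mktens f) w = f w.
Proof. by rewrite /coef /mktens mxE enum_rankK. Qed.

Lemma tens_eq (x y : tens) : (forall w, coef x w = coef y w) -> x = y.
Proof.
move=> h; apply/rowP => i; have := h (enum_val i).
by rewrite /coef enum_valK (ord1 ord0).
Qed.

Lemma wseq_inj (u v : Word) : wseq u = wseq v -> u = v.
Proof.
case: u => [k t]; case: v => [k' t'] /= h.
have ek : k = k' by apply: val_inj; have := congr1 size h; rewrite /wseq /= !size_tuple.
subst k'; congr existT; apply: val_inj; exact: h.
Qed.

Lemma coef_act B (x : tens) w : coef (act B x) w = \sum_v coef x v * K B w v.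
Proof.
rewrite /act coef_mktens big_mkcond /=; apply: eq_bigr => v _.
by rewrite /K; case: ifP => _; rewrite ?mulr0.
Qed.

Lemma PZ1 s t : size s = size t -> PZ (1%:M : 'M[R]_d) s t = (s == t)%:R.
Proof.
rewrite /PZ; elim: s t => [|a s IH] [|b t] //=.
  by rewrite big_nil.
move=> [e]; rewrite big_cons IH // mxE /= eqseq_cons.
by case: (a == b); case: (s == t); rewrite ?mulr1 ?mulr0 ?mul0r.
Qed.

Lemma act1 (x : tens) : act (1%:M : 'M[R]_d) x = x.
Proof.
apply: tens_eq => w; rewrite coef_act (bigD1 w) //= big1 ?addr0.
  by rewrite /K eqxx PZ1 // eqxx mulr1.
move=> v hv; rewrite /K; case: ifP => e; last by rewrite mulr0.
rewrite PZ1; last by rewrite (eqP e).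
case: eqP => h; last by rewrite mulr0.
by move: hv; rewrite (wseq_inj _ _ h) eqxx.
Qed.

Lemma prod_zip_nth (F : 'I_d -> 'I_d -> R) x0 y0 s t : size s = size t ->
  \prod_(p <- zip s t) F p.1 p.2 = \prod_(i < size s) F (nth x0 s i) (nth y0 t i).
Proof.
elim: s t => [|a s IH] [|b t] //=.
  by rewrite big_nil big_ord0.
move=> [e]; by rewrite big_cons big_ord_recl /= IH.
Qed.

Lemma codom_size k (f : {ffun 'I_k -> 'I_d}) : size (codom f) == k.
Proof. by rewrite size_codom card_ord. Qed.

Definition phi k (hk : (k < n.+1)%N) (f : {ffun 'I_k -> 'I_d}) : Word :=
  existT (fun k0 : 'I_n.+1 => (nat_of_ord k0).-tuple 'I_d) (Ordinal hk)
    (Tuple (codom_size _ f)).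

Lemma nth_codom_ord x0 k (f : {ffun 'I_k -> 'I_d}) (i : 'I_k) :
  nth x0 (codom f) i = f i.
Proof.
rewrite codomE (nth_map i); last by rewrite size_enum_ord.
by rewrite nth_ord_enum.
Qed.

Lemma sum_words k (hk : (k < n.+1)%N) (x0 : 'I_d) (G : seq 'I_d -> R) :
  \sum_(u : Word | size (wseq u) == k) G (wseq u) =
  \sum_(f : {ffun 'I_k -> 'I_d}) G (codom f).
Proof.
pose psi (u : Word) : {ffun 'I_k -> 'I_d} := [ffun i : 'I_k => nth x0 (wseq u) i].
rewrite (reindex_onto (phi _ hk) psi).
  apply: eq_big => // f; rewrite codom_size /=; apply/eqP/ffunP => i.
  by rewrite ffunE nth_codom_ord.
move=> u /eqP hu; apply: wseq_inj _ _ _; rewrite /wseq /= codomE.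
rewrite (eq_map (g := fun i : 'I_k => nth x0 (wseq u) i)); last by move=> i; rewrite ffunE.
rewrite (map_comp (nth x0 (wseq u)) val) val_enum_ord -hu.
exact: mkseq_nth.
Qed.

Lemma key (A B : 'M[R]_d) (x0 : 'I_d) (s v : seq 'I_d) : size s = size v ->
  \sum_(f : {ffun 'I_(size s) -> 'I_d}) PZ A s (codom f) * PZ B (codom f) v =
  PZ (A *m B) s v.
Proof.
move=> e; rewrite /PZ (prod_zip_nth _ x0 x0) //.
rewrite (eq_bigr (fun f : {ffun 'I_(size s) -> 'I_d} =>
   \prod_(i < size s) (A (nth x0 s i) (f i) * B (f i) (nth x0 v i)))).
  rewrite -(bigA_distr_bigA (fun (i : 'I_(size s)) j => A (nth x0 s i) j * B j (nth x0 v i))) /=.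
  apply: eq_bigr => i _; rewrite mxE.
  by [].
move=> f _; rewrite big_split /=.
rewrite (prod_zip_nth _ x0 x0); last by rewrite (eqP (codom_size _ f)).
rewrite (prod_zip_nth _ x0 x0); last by rewrite (eqP (codom_size _ f)).
rewrite (eqP (codom_size _ f)); congr (_ * _); apply: eq_bigr => i _;
  by rewrite nth_codom_ord.
Qed.


Lemma size_wseq_lt (w : Word) : (size (wseq w) < n.+1)%N.
Proof. by rewrite /wseq size_tuple. Qed.

Lemma Kmul (A B : 'M[R]_d) (w v : Word) :
  \sum_u K A w u * K B u v = K (A *m B) w v.
Proof.
rewrite (bigID (fun u => size (wseq u) == size (wseq w))) /=.
rewrite [X in _ + X]big1 ?addr0; last first.
  by move=> u /negbTE hu; rewrite /K hu mul0r.
rewrite (eq_bigr (fun u => PZ A (wseq w) (wseq u) * K B u v)); last first.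
  by move=> u hu; rewrite /K hu.
rewrite {2}/K; case: ifP => e; last first.
  apply: big1 => u hu; rewrite /K (eqP hu) e mulr0 //.
rewrite (eq_bigr (fun u => PZ A (wseq w) (wseq u) * PZ B (wseq u) (wseq v))); last first.
  by move=> u hu; rewrite /K (eqP hu) e.
case hw: (wseq w) => [|x0 s].
  rewrite (big_pred1 w); last first.
    move=> u /=; apply/idP/idP.
      by move=> /eqP/size0nil h; apply/eqP/wseq_inj; rewrite h hw.
    by move=> /eqP ->; rewrite hw.
  rewrite ?hw /PZ /= !big_nil mul1r.
  by case: (wseq v) => *; rewrite !big_nil.
rewrite -hw (sum_words _ (size_wseq_lt w) x0
  (fun t => PZ A (wseq w) t * PZ B t (wseq v))).
apply: (key _ _ x0); exact: (esym (eqP e)).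
Qed.

Lemma act_mul (A B : 'M[R]_d) (x : tens) : act A (act B x) = act (A *m B) x.
Proof.
apply: tens_eq => w; rewrite !coef_act.
under eq_bigr => u _ do rewrite coef_act mulr_suml.
rewrite exchange_big /=; apply: eq_bigr => v _.
under eq_bigr => u _ do rewrite -mulrA (mulrC (K B u v)).
by rewrite -mulr_sumr Kmul.
Qed.

Lemma act_invK (A : 'M[R]_d) (x : tens) : A \in unitmx -> act (invmx A) (act A x) = x.
Proof. by move=> hA; rewrite act_mul mulVmx // act1. Qed.


Section P.
Variable U : set tens.

Lemma poly_on_ext (f g : tens -> R) : (forall c, U c -> f c = g c) ->
  poly_on U g -> poly_on U f.
Proof. by move=> e [p [hp hg]]; exists p; split => // c hc; rewrite e // hg. Qed.

Lemma poly_on_cst a : poly_on U (fun _ => a).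
Proof. by exists (fun _ => a); split => //; constructor. Qed.

Lemma poly_on_add f g : poly_on U f -> poly_on U g -> poly_on U (fun c => f c + g c).
Proof.
move=> [p [hp hf]] [q [hq hg]]; exists (fun x => p x + q x); split.
  exact: pf_add.
by move=> c hc; rewrite hf // hg.
Qed.

Lemma poly_on_mul f g : poly_on U f -> poly_on U g -> poly_on U (fun c => f c * g c).
Proof.
move=> [p [hp hf]] [q [hq hg]]; exists (fun x => p x * q x); split.
  exact: pf_mul.
by move=> c hc; rewrite hf // hg.
Qed.

Lemma poly_on_sum (I : Type) (r : seq I) (P : pred I) (F : I -> tens -> R) :
  (forall i, P i -> poly_on U (F i)) -> poly_on U (fun c => \sum_(i <- r | P i) F i c).
Proof.
move=> h; elim: r => [|i r IH].
  by apply: (poly_on_ext _ (fun _ => 0)) => [c _|]; rewrite ?big_nil //; exact: poly_on_cst.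
case hi: (P i).
  apply: (poly_on_ext _ (fun c => F i c + \sum_(j <- r | P j) F j c)).
    by move=> c _; rewrite big_cons hi.
  exact: poly_on_add (h _ hi) IH.
apply: (poly_on_ext _ (fun c => \sum_(j <- r | P j) F j c)) => //.
by move=> c _; rewrite big_cons hi.
Qed.

Lemma poly_on_prod (I : Type) (r : seq I) (P : pred I) (F : I -> tens -> R) :
  (forall i, P i -> poly_on U (F i)) -> poly_on U (fun c => \prod_(i <- r | P i) F i c).
Proof.
move=> h; elim: r => [|i r IH].
  by apply: (poly_on_ext _ (fun _ => 1)) => [c _|]; rewrite ?big_nil //; exact: poly_on_cst.
case hi: (P i).
  apply: (poly_on_ext _ (fun c => F i c * \prod_(j <- r | P j) F j c)).
    by move=> c _; rewrite big_cons hi.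
  exact: poly_on_mul (h _ hi) IH.
apply: (poly_on_ext _ (fun c => \prod_(j <- r | P j) F j c)) => //.
by move=> c _; rewrite big_cons hi.
Qed.

Lemma poly_on_coef v : poly_on U (fun c => coef c v).
Proof. by exists (fun x => x ord0 (enum_rank v)); split => //; constructor. Qed.

End P.

Lemma Mdiag (L P : 'M[R]_d) i j : is_diag_mx L -> (L *m P) i j = L i i * P i j.
Proof.
move=> /is_diag_mxP hL; rewrite mxE (bigD1 i) //= big1 ?addr0 // => l hl.
by rewrite hL ?mul0r // eq_sym.
Qed.

End H.

Theorem proposition4p10 (R : realType) (n d : nat) (G : set 'M[R]_d)
  (U : set (tens R n d)) (rho lam kappa : tens R n d -> 'M[R]_d) :
  is_subgroup G ->
  (forall c, U c -> lie c) ->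
  (exists c, U c) ->
  (forall g c, G g -> U c -> U (act g c)) ->
  semialgebraic U ->
  moving_frame G U rho ->
  almost_polynomial G U rho lam kappa ->
  let F := fun c => act (lam c *m rho c) c in
  let nz := fun w : Word n d => exists c, U c /\ coef (F c) w <> 0 in
  (forall w, nz w ->
     poly_on U (fun c => coef (F c) w) /\
     invariant_on G U (fun c => coef (F c) w)) /\
  (forall I : tens R n d -> R, invariant_on G U I ->
     exists I' : ({w : Word n d | nz w} -> R) -> R,
       forall c, U c -> I c = I' (fun w => coef (F c) (proj1_sig w))).
Proof.
move=> [G1 Gunit GM GV] _ _ UG _ [_ rhoG rhoeq] [lamU lamI lampoly _ lamk] F nz.
have Finv : forall g c, G g -> U c -> F (act g c) = F c.
  move=> g c hg hc; rewrite /F lamI // rhoeq // act_mul mulmxA mulmxKV //.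
  exact: Gunit.
split.
  move=> w _; split; last by move=> g c hg hc; rewrite Finv.
  apply: (@poly_on_ext R n d U _ (fun c => \sum_v (if size (wseq v) == size (wseq w) then
     coef c v * \prod_(p <- zip (wseq w) (wseq v)) (lam c p.1 p.1 * rho c p.1 p.2)
     else 0))).
    move=> c hc; rewrite /F coef_act; apply: eq_bigr => v _; rewrite /K.
    case: ifP => _; last by rewrite mulr0.
    congr (_ * _); rewrite /PZ; apply: eq_bigr => p _; apply: Mdiag.
    exact: (lamU c hc).2.
  apply: poly_on_sum => v _.
  case: (size (wseq v) == size (wseq w)); last exact: poly_on_cst.
  apply: poly_on_mul; first exact: poly_on_coef.
  apply: poly_on_prod => p _; exact: lampoly.
move=> I hI.
pose Q (f : {w : Word n d | nz w} -> R) c :=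
  U c /\ forall w (h : nz w), coef (F c) w = f (exist _ w h).
exists (fun f => match pselect (exists c, Q f c) with
                 | left h => I (projT1 (cid h)) | right _ => 0 end).
move=> c hc; case: pselect => [h|h]; last first.
  by exfalso; apply: h; exists c; split.
case: (cid h) => c' [hc' he] /=.
have eF : F c' = F c.
  apply: tens_eq => w; case: (pselect (nz w)) => [hw|hw]; first exact: he w hw.
  have z : forall c0, U c0 -> coef (F c0) w = 0.
    move=> c0 hc0; case: (eqVneq (coef (F c0) w) 0) => // hne.
    by exfalso; apply: hw; exists c0; split => //; apply/eqP.
  by rewrite !z.
have el : lam c' = lam c.
  transitivity (kappa (F c')); first exact: lamk.
  rewrite eF; symmetry; exact: lamk.
have e2 : act (rho c') c' = act (rho c) c.
  move: eF; rewrite /F el -!act_mul => /(congr1 (act (invmx (lam c)))).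
  by rewrite !act_invK //; exact: (lamU c hc).1.
have hg : G (invmx (rho c') *m rho c) by apply: GM; [apply: GV; apply: rhoG | apply: rhoG].
rewrite -(hI _ _ hg hc) -act_mul -e2 act_invK //.
by apply: Gunit; apply: rhoG.
Qed.
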